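(* Let $T$ be a tree, let $f_t$ be a token-placement of $T$ with colors $\{1,2\}$ and let $f$ be a token-placement of $T$ with the same number of color-1 tokens as $f_t$. For an edge $e=xy$ of $T$, let $T(x)$ and $T(y)$ be the components of $T-e$ containing $x$ and $y$, and let $\mathrm{diff}_f(e)=\bigl|\,|\{v\in T(x): f(v)=1\}|-|\{v\in T(x): f_t(v)=1\}|\,\bigr|$. Let $D(f)=\sum_{e\in E(T)}\mathrm{diff}_f(e)$. If $D(f)\neq 0$, then there is an edge $uv$ of $T$ such that the token-placement $f'$ obtained from $f$ by swapping the tokens on $u$ and $v$ satisfies $D(f')=D(f)-1$.
   Context: A token-placement of a graph with color set $\{1,2\}$ is a surjective map from its vertex set to $\{1,2\}$. Swapping the tokens on adjacent vertices $u,v$ turns $f$ into $f'$ with $f'(u)=f(v)$, $f'(v)=f(u)$, $f'(w)=f(w)$ otherwise. Note $\mathrm{diff}_f(e)$ does not depend on which endpoint's side is used. *)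

(* Defs.v *)
From mathcomp Require Import all_boot all_order all_algebra.
Set Implicit Arguments. Unset Strict Implicit. Unset Printing Implicit Defensive.

Definition simple_graph (T : finType) (e : rel T) : Prop :=
  symmetric e /\ irreflexive e.

Definition has_cycle (T : finType) (e : rel T) : Prop :=
  exists (x : T) (p : seq T),
    [/\ 2 <= size p, uniq (x :: p), path e x p & e (last x p) x].

Definition is_tree (T : finType) (e : rel T) : Prop :=
  [/\ simple_graph e, (forall x y : T, connect e x y) & ~ has_cycle e].

Definition token_placement (T : finType) (f : T -> nat) : Prop :=
  (forall v, (f v == 1) || (f v == 2)) /\
  (exists v, f v = 1) /\ (exists v, f v = 2).

Definition ones (T : finType) (f : T -> nat) (A : {set T}) : nat :=
  #|[set v in A | f v == 1]|.

Definition remove_edge (T : finType) (e : rel T) (x y : T) : rel T :=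
  fun a b => e a b && ~~ (((a == x) && (b == y)) || ((a == y) && (b == x))).

Definition side (T : finType) (e : rel T) (x y : T) : {set T} :=
  [set w | connect (remove_edge e x y) x w].

Definition diffe (T : finType) (e : rel T) (ft f : T -> nat) (x y : T) : nat :=
  let a := ones f (side e x y) in let b := ones ft (side e x y) in
  ((a - b) + (b - a))%N.

(* D(f) = sum over edges (each unordered edge counted once). *)
Definition Dsum (T : finType) (e : rel T) (ft f : T -> nat) : nat :=
  \sum_(p : T * T | e p.1 p.2 && (enum_rank p.1 < enum_rank p.2)%N)
     diffe e ft f p.1 p.2.

Definition swap (T : finType) (f : T -> nat) (u v : T) : T -> nat :=
  fun w => if w == u then f v else if w == v then f u else f w.

(* Main.v *)
Require Import Defs.
From mathcomp Require Import all_boot all_order all_algebra.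
Set Implicit Arguments. Unset Strict Implicit. Unset Printing Implicit Defensive.
Import Order.TTheory GRing.Theory Num.Theory.

Section G.
Variables (T : finType) (e : rel T).
Hypothesis tree : is_tree e.

Lemma e_sym : symmetric e. Proof. by case: tree => [[]]. Qed.
Lemma eirr : irreflexive e. Proof. by case: tree => [[]]. Qed.
Lemma econn x y : connect e x y. Proof. by case: tree. Qed.
Lemma enocyc : ~ has_cycle e. Proof. by case: tree. Qed.

Lemma closure_conn (r : rel T) (P : T -> Prop) x w :
  (forall a b, P a -> r a b -> P b) -> P x -> connect r x w -> P w.
Proof.
move=> cl Px /connectP [p pth ->]; elim: p x Px pth => [|a p IH] x Px //=.
case/andP=> rxa pth; apply: IH pth; exact: cl rxa.
Qed.

Lemma sub_conn (r r' : rel T) x w :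
  (forall a b, r a b -> r' a b) -> connect r x w -> connect r' x w.
Proof.
move=> sub; apply: (closure_conn (P := connect r' x)) (connect0 _ _) => a b cab rab.
by apply: connect_trans cab (connect1 (sub _ _ rab)).
Qed.

Lemma rem_sym x y : symmetric (remove_edge e x y).
Proof.
move=> a b; rewrite /remove_edge e_sym; congr (_ && _).
by case: (a == x) (b == x) (a == y) (b == y) => [] [] [] [].
Qed.

Lemma remC x y : remove_edge e x y =2 remove_edge e y x.
Proof.
move=> a b; rewrite /remove_edge; congr (_ && _).
by case: (a == x) (b == x) (a == y) (b == y) => [] [] [] [].
Qed.

Lemma rem_sub x y a b : remove_edge e x y a b -> e a b.
Proof. by case/andP. Qed.

Lemma noback u v : e u v -> ~~ connect (remove_edge e u v) u v.
Proof.
move=> euv; apply/negP => /connectP [p pth lst].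
case: (shortenP pth) lst => p' pth' uq _ lst.
case: p' pth' uq lst => [|a [|b q]] /=.
- by move=> _ _ vu; move: euv; rewrite vu eirr.
- rewrite andbT => ra _ va; move: ra; rewrite -va /remove_edge !eqxx /=.
  by rewrite andbF.
move=> pth' uq lst; apply: enocyc; exists u, [:: a, b & q]; split => //=.
  case/and3P: pth' => h1 h2 h3; rewrite (rem_sub h1) (rem_sub h2) /=.
  by apply: (sub_path (e := remove_edge e u v)) h3 => c d /rem_sub.
by rewrite -lst e_sym.
Qed.

Definition avoid y := [rel a b | [&& e a b, a != y & b != y]].

Lemma avoid_rem y z a b : avoid y a b -> remove_edge e z y a b.
Proof.
case/and3P=> eab ay by'; rewrite /remove_edge eab /=.
by rewrite (negbTE ay) (negbTE by') !andbF.
Qed.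

Lemma side_avoid y z w : e z y -> w \in side e z y -> connect (avoid y) z w.
Proof.
move=> ezy; rewrite inE; apply: (closure_conn (P := connect (avoid y) z)) (connect0 _ _) => a b ca rab.
have ny c : connect (avoid y) z c -> c != y.
  move=> czc; apply/eqP => cy; move: czc; rewrite cy => czy.
  by move/negP: (noback ezy); apply; apply: sub_conn czy => ? ?; apply: avoid_rem.
have ay := ny a ca; have by' : b != y.
  apply/eqP => by'; subst b; move/negP: (noback ezy); apply.
  apply: connect_trans (connect1 rab); apply: sub_conn ca => ? ?; apply: avoid_rem.
apply: connect_trans ca (connect1 _); rewrite /= ay by' !andbT.
exact: rem_sub rab.
Qed.

Lemma side_in x y : x \in side e x y.
Proof. by rewrite inE connect0. Qed.

Lemma side_step x y a b : a \in side e x y -> remove_edge e x y a b -> b \in side e x y.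
Proof. by rewrite !inE => ca rab; apply: connect_trans ca (connect1 rab). Qed.

Lemma side_cover x y w : e x y -> (w \in side e x y) || (w \in side e y x).
Proof.
move=> exy; apply: (closure_conn (P := fun w => (w \in side e x y) || (w \in side e y x))) (econn y w).
  move=> a b /orP [] ha eab.
    case E: (remove_edge e x y a b); first by rewrite (side_step ha E).
    move: E; rewrite /remove_edge eab /= => /negbFE /orP [] /andP [/eqP ? /eqP ?]; subst.
      by rewrite side_in orbT.
    by rewrite side_in.
  case E: (remove_edge e y x a b); first by rewrite (side_step ha E) orbT.
  move: E; rewrite /remove_edge eab /= => /negbFE /orP [] /andP [/eqP ? /eqP ?]; subst.
    by rewrite side_in.
  by rewrite side_in orbT.
by rewrite side_in orbT.
Qed.

Lemma side_disj x y w : e x y -> w \in side e x y -> w \notin side e y x.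
Proof.
move=> exy; rewrite !inE => cx; apply/negP => cy; move/negP: (noback exy); apply.
have cs := sym_connect_sym (rem_sym x y).
apply: connect_trans cx _; rewrite cs.
by rewrite (eq_connect (remC x y)).
Qed.

Lemma y_notin y z : e y z -> y \notin side e z y.
Proof. by move=> eyz; rewrite inE; apply: noback; rewrite e_sym. Qed.

Lemma avoid_rem2 y x a b : avoid y a b -> remove_edge e y x a b.
Proof. by move=> h; rewrite remC; apply: avoid_rem. Qed.

Lemma side_sub x y z : e y z -> z != x -> {subset side e z y <= side e y x}.
Proof.
move=> eyz zx w wz.
have ezy : e z y by rewrite e_sym.
have cw := side_avoid ezy wz.
rewrite inE; apply: connect_trans (connect1 _) (sub_conn (@avoid_rem2 y x) cw).
rewrite /remove_edge eyz eqxx (negbTE zx) /=.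
by apply/andP => -[/eqP yx /eqP zy]; move: zx; rewrite zy yx eqxx.
Qed.

Lemma nbr_disj y z1 z2 w : e y z1 -> e y z2 ->
  w \in side e z1 y -> w \in side e z2 y -> z1 = z2.
Proof.
move=> e1 e2 w1 w2; apply/eqP; apply/negP => /negP n12.
have f1 : e z1 y by rewrite e_sym.
have f2 : e z2 y by rewrite e_sym.
have c1 := side_avoid f1 w1.
have c2 := side_avoid f2 w2.
have c12 : connect (avoid y) z1 z2.
  apply: connect_trans c1 _; rewrite (sym_connect_sym _) // => a b.
  by rewrite /avoid /= e_sym; case: (a != y) (b != y) => [] [] //=; rewrite ?andbF ?andbT.
move/negP: (noback f1); apply.
apply: connect_trans (sub_conn (@avoid_rem y z1) c12) (connect1 _).
rewrite /remove_edge (e_sym z2) e2 /= eqxx eq_sym (negbTE n12) /=.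
by apply/andP => -[/eqP zy _]; move: e2; rewrite zy eirr.
Qed.

Lemma side_decomp x y w : e y x -> w \in side e y x -> w != y ->
  exists2 z, (e y z) && (z != x) & w \in side e z y.
Proof.
move=> eyx; rewrite inE.
apply: (closure_conn (P := fun w => w != y -> exists2 z, (e y z) && (z != x) & w \in side e z y)).
- move=> a b Pa rab nb; case: (eqVneq a y) => [ay|ny].
    subst a; exists b; last exact: side_in.
    move: rab; rewrite /remove_edge eqxx /= => /andP [-> ].
    by apply: contra => /eqP ->; rewrite eqxx.
  case: (Pa ny) => z zP az; exists z => //; apply: side_step az _.
  apply: avoid_rem; rewrite /= ny nb !andbT; exact: rem_sub rab.
- by rewrite eqxx.
Qed.

End G.

Section B0.
Local Open Scope ring_scope.

Lemma onesE (T : finType) (f : T -> nat) (S : {set T}) :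
  (ones f S)%:Z = \sum_(w in S) ((f w == 1%N) : nat)%:Z.
Proof.
rewrite /ones -sum1_card (big_morph Posz PoszD (erefl 0%:Z)).
rewrite [RHS]big_mkcond /= [LHS]big_mkcond /=; apply: eq_bigr => w _.
by rewrite !inE; case: (w \in S); case: (f w == 1%N).
Qed.

Lemma distE (a b : nat) : (a - b + (b - a))%N = `|a%:Z - b%:Z|%N.
Proof.
case: (leqP a b) => ab.
  have -> : (a - b = 0)%N by apply/eqP; rewrite subn_eq0.
  by rewrite add0n distnEr.
have -> : (b - a = 0)%N by apply/eqP; rewrite subn_eq0 ltnW.
by rewrite addn0 distnEl // ltnW.
Qed.

Section M.
Variables (T : finType) (e : rel T) (ft : T -> nat).
Hypothesis tree : is_tree e.

Definition h (f : T -> nat) w : int := ((f w == 1%N) : nat)%:Z - ((ft w == 1%N) : nat)%:Z.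
Definition g f x y : int := \sum_(w in side e x y) h f w.

Lemma diffeE f x y : diffe e ft f x y = `|g f x y|%N.
Proof.
rewrite /diffe distE !onesE /g /h; congr absz.
by rewrite sumrB.
Qed.

Lemma g_anti f x y : ones f [set: T] = ones ft [set: T] -> e x y -> g f x y = - g f y x.
Proof.
move=> tot exy; apply/eqP; rewrite -subr_eq0 opprK.
have : \sum_w h f w = 0.
  have := congr1 Posz tot; rewrite !onesE => E.
  rewrite /h sumrB; apply/eqP; rewrite subr_eq0; apply/eqP.
  move: E; rewrite !(eq_bigl predT _ (fun w => in_setT w)) => E.
  exact: E.
rewrite (bigID (fun w => w \in side e x y)) /= => <-.
rewrite /g; apply/eqP; congr (_ + _); apply: eq_bigl => w.
have := side_cover tree w exy; have := @side_disj _ _ tree x y w exy.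
by case: (w \in side e x y); case: (w \in side e y x) => //= ->.
Qed.

Lemma g_decomp f x y : e y x ->
  g f y x = h f y + \sum_(z | e y z && (z != x)) g f z y.
Proof.
move=> eyx; rewrite /g (bigD1 y) ?side_in //=; congr (_ + _).
pose p w := odflt y [pick z | e y z && (z != x) && (w \in side e z y)].
have pP w : (w \in side e y x) && (w != y) -> e y (p w) && (p w != x) && (w \in side e (p w) y).
  case/andP=> w1 w2; rewrite /p; case: pickP => [z /= -> //|].
  case: (side_decomp eyx w1 w2) => z zP wz /(_ z); by rewrite zP wz.
rewrite (partition_big p (fun z => e y z && (z != x))); last first.
  by move=> w /pP /andP [].
apply: eq_bigr => z zP; apply: eq_bigl => w; apply/idP/idP.
  by case/andP => /pP /andP [_ wp] /eqP <-.
move=> wz; case/andP: zP => eyz zx.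
have wy : w \in side e y x := side_sub tree eyz zx wz.
have wny : w != y by apply/eqP => wy'; move: (y_notin tree eyz); subst w; by rewrite wz.
have P1 : (w \in side e y x) && (w != y) by rewrite wy wny.
rewrite P1 /=; case/andP: (pP w P1) => /andP [e2 _] w2.
by apply/eqP; apply: (nbr_disj tree e2 eyz w2 wz).
Qed.
End M.

Lemma sum_pos (I : finType) (P : pred I) (F : I -> int) :
  0 < \sum_(i | P i) F i -> exists2 i, P i & 0 < F i.
Proof.
move=> pos; case: (pickP (fun i => P i && (0 < F i))) => [i /andP [] | none].
  by exists i.
have : \sum_(i | P i) F i <= \sum_(i | P i) 0.
  apply: ler_sum => i Pi; have := none i; rewrite Pi /= => /negbT.
  by rewrite -leNgt.
by rewrite big1_eq leNgt pos.
Qed.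

Lemma absz_pred (g : int) : 0 < g -> (`|g - 1|%N).+1 = `|g|%N.
Proof.
case: g => // [[|m]] _ //=.
by rewrite subSS subn0.
Qed.

Section N.
Variables (T : finType) (e : rel T) (ft : T -> nat).
Hypothesis tree : is_tree e.

Lemma h_swap f u v w : f u = 1%N -> f v != 1%N -> u != v ->
  h ft (swap f u v) w = h ft f w - ((w == u) : nat)%:Z + ((w == v) : nat)%:Z.
Proof.
move=> fu fv uv; rewrite /h /swap.
case: (eqVneq w u) => [->|wu]; first by rewrite (negbTE uv) fu (negbTE fv) eqxx /=; rewrite addr0 addrAC.
case: (eqVneq w v) => [->|wv]; last by rewrite subr0 addr0.
by rewrite fu eqxx (negbTE fv) /= subr0 addrAC.
Qed.

Lemma sum_ind (S : {set T}) u : \sum_(w in S) (((w == u) : nat)%:Z) = ((u \in S) : nat)%:Z.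
Proof.
case uS: (u \in S).
  rewrite (bigD1 u) //= eqxx big1 ?addr0 // => w /andP [_ /negbTE ->] //.
by rewrite big1 // => w wS; case: eqP wS => // ->; rewrite uS.
Qed.

Lemma g_swap f u v a b : f u = 1%N -> f v != 1%N -> u != v ->
  g e ft (swap f u v) a b = g e ft f a b - ((u \in side e a b) : nat)%:Z + ((v \in side e a b) : nat)%:Z.
Proof.
move=> fu fv uv; rewrite /g; under eq_bigr do rewrite h_swap //.
by rewrite big_split /= sumrB !sum_ind.
Qed.
End N.

Section S.
Variables (T : finType) (e : rel T) (ft f : T -> nat).
Hypothesis tree : is_tree e.
Hypothesis tot : ones f [set: T] = ones ft [set: T].

Lemma card_lt x y z : e y z -> z != x -> (#|side e z y| < #|side e y x|)%N.
Proof.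
move=> eyz zx; apply: proper_card; apply/properP; split.
  by apply/subsetP => w; apply: side_sub.
by exists y; [exact: side_in | exact: y_notin].
Qed.

Lemma step1 n x y : (#|side e x y| < n)%N -> e x y -> 0 < g e ft f x y ->
  exists a b, [/\ e a b, f a = 1%N & 0 < g e ft f a b].
Proof.
elim: n x y => // n IH x y cn exy pos.
case: (eqVneq (f x) 1%N) => [fx|fx]; first by exists x, y.
have hx : h ft f x <= 0 by rewrite /h (negbTE fx) sub0r oppr_le0.
have eyx : e y x by rewrite (e_sym tree).
move: pos; rewrite (g_decomp ft tree f exy) => pos.
have : 0 < \sum_(z | e x z && (z != y)) g e ft f z x.
  apply: (lt_le_trans pos); by rewrite gerDr.
case/sum_pos => z /andP [exz zy] gz.
have ezx : e z x by rewrite (e_sym tree).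
apply: (IH z x) => //.
apply: (leq_trans (card_lt exz zy)); by rewrite -ltnS.
Qed.

Lemma step2 n x y : (#|side e y x| < n)%N -> e x y -> f x = 1%N -> 0 < g e ft f x y ->
  exists u v, [/\ e u v, f u = 1%N, f v != 1%N & 0 < g e ft f u v].
Proof.
elim: n x y => // n IH x y cn exy fx pos.
case: (eqVneq (f y) 1%N) => [fy|fy]; last by exists x, y.
have hy : 0 <= h ft f y by rewrite /h fy eqxx subr_ge0; case: (ft y == 1%N).
have eyx : e y x by rewrite (e_sym tree).
have neg : g e ft f y x < 0 by rewrite (g_anti tree tot eyx) oppr_lt0.
move: neg; rewrite (g_decomp ft tree f eyx) => neg.
have : 0 < \sum_(z | e y z && (z != x)) - g e ft f z y.
  rewrite sumrN oppr_gt0; apply: le_lt_trans neg; by rewrite lerDr.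
case/sum_pos => z /andP [eyz zx]; rewrite oppr_gt0 => gz.
have ezy : e z y by rewrite (e_sym tree).
apply: (IH y z) => //.
  apply: (leq_trans (card_lt eyz zx)); by rewrite -ltnS.
by rewrite (g_anti tree tot eyz) oppr_gt0.
Qed.
End S.

End B0.

Theorem mainTheorem8 (T : finType) (e : rel T) (ft f : T -> nat) :
  is_tree e ->
  token_placement ft ->
  token_placement f ->
  ones f [set: T] = ones ft [set: T] ->
  Dsum e ft f <> 0%N ->
  exists u v : T, e u v /\ (Dsum e ft (swap f u v)).+1 = Dsum e ft f.
Proof.
move=> tr _ _ tot D0.
have [p Pp dp] : exists2 p : T * T, (e p.1 p.2 && (enum_rank p.1 < enum_rank p.2)%N)
    & diffe e ft f p.1 p.2 != 0%N.
  case: (pickP (fun p : T * T => (e p.1 p.2 && (enum_rank p.1 < enum_rank p.2)%N)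
      && (diffe e ft f p.1 p.2 != 0%N))) => [p /andP [] | none]; first by exists p.
  exfalso; apply: D0; rewrite /Dsum big1 // => p Pp.
  by have := none p; rewrite Pp /= => /negbFE /eqP.
have [x [y [exy gpos]]] : exists x y, e x y /\ (0 < g e ft f x y)%R.
  move: dp; rewrite diffeE absz_eq0; case: p Pp => a b /= /andP [eab _] gne.
  case: (ltgtP (g e ft f a b) 0%R) gne => // [gn|gp] _; last by exists a, b.
  have eba : e b a by rewrite (e_sym tr).
  exists b, a; split => //; by rewrite (g_anti tr tot eba) oppr_gt0.
have [a [b [eab fa ga]]] := step1 tr (n := #|side e x y|.+1) (leqnn _) exy gpos.
have [u [v [euv fu fv guv]]] := step2 tr tot (n := #|side e b a|.+1) (leqnn _) eab fa ga.
exists u, v; split => //.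
have uv : u != v by apply/eqP => uv; move: euv; rewrite uv (eirr tr).
have evu : e v u by rewrite (e_sym tr).
have ruv : enum_rank u != enum_rank v by apply: contra uv => /eqP /enum_rank_inj ->.
pose p0 := if (enum_rank u < enum_rank v)%N then (u, v) else (v, u).
have Pp0 : e p0.1 p0.2 && (enum_rank p0.1 < enum_rank p0.2)%N.
  rewrite /p0; case: ifP => [-> | /negbT]; first by rewrite euv.
  move=> h; rewrite evu /= ltn_neqAle leqNgt h andbT eq_sym; exact: ruv.
rewrite /Dsum (bigD1 p0 Pp0) [in RHS](bigD1 p0 Pp0) /= -addSn; congr addn.
  rewrite !diffeE g_swap //; rewrite /p0; case: ifP => _ /=.
    rewrite side_in (negbTE (side_disj tr evu (side_in _ v u))) /= addr0.
    exact: absz_pred.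
  rewrite (negbTE (side_disj tr euv (side_in _ u v))) side_in /= subr0.
  rewrite (g_anti tr tot evu) addrC -opprB !abszN; exact: absz_pred.
apply: eq_bigr => [[a' b']] /andP [/andP [eab' rab] neq] /=.
have same : (u \in side e a' b') = (v \in side e a' b').
  have r : remove_edge e a' b' u v.
    rewrite /remove_edge euv /=; apply/negP => /orP [] /andP [/eqP ua /eqP vb];
      subst a' b'; move: neq; rewrite /p0 /=.
      by rewrite rab eqxx.
    by rewrite ltnNge (ltnW rab) /= eqxx.
  apply/idP/idP => h; first exact: side_step h r.
  by apply: side_step h _; rewrite (rem_sym tr).
by rewrite !diffeE g_swap // same subrK.
Qed.
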